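(* Suppose the following holds: for every separable Hilbert space $\mathcal{H}'$ and every pair of orthogonal projections $P', Q'$ on $\mathcal{H}'$ with $\mathcal{K}_{P',Q'} = \mathcal{K}_{1-P',1-Q'} = \{0\}$, there exists a unitary $W$ on $\mathcal{H}'$ with $W P' W^{-1} = Q'$ and $W Q' W^{-1} = P'$. Then for every separable Hilbert space $\mathcal{H}$ and every pair of orthogonal projections $P, Q$ on $\mathcal{H}$, there exists a unitary $U$ on $\mathcal{H}$ with $U P U^{-1} = Q$ and $U Q U^{-1} = P$ if and only if $\dim(\mathcal{K}_{P,Q}) = \dim(\mathcal{K}_{1-P,1-Q})$ (where the dimensions, possibly infinite, are compared as Hilbert space dimensions).
   Context: For orthogonal projections $R, S$ on a Hilbert space, $\mathcal{K}_{R,S} := \operatorname{ran} R \cap \ker S$. Thus $\mathcal{K}_{P,Q} = \operatorname{ran} P \cap \ker Q$ and $\mathcal{K}_{1-P,1-Q} = \ker P \cap \operatorname{ran} Q$. The paper phrases this as: ''To prove the theorem (existence of such a unitary iff the dimensions agree), it suffices to prove it in the case $\mathcal{K}_{P,Q} = \mathcal{K}_{1-P,1-Q} = \{0\}$.'' *)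

(* Defs.v *)
From mathcomp Require Import all_boot all_order all_algebra.
From mathcomp Require Import reals.
From mathcomp Require Import boolp classical_sets cardinality.
From mathcomp.real_closed Require Import complex.
Set Implicit Arguments. Unset Strict Implicit. Unset Printing Implicit Defensive.
Import Order.TTheory GRing.Theory Num.Theory.
Local Open Scope ring_scope.
Local Open Scope classical_set_scope.

Section Hilbert.
Variable R : realType.
Local Notation C := (R[i]).
Variables (V : lmodType C) (ip : V -> V -> C).

Definition inner_product : Prop :=
  [/\ (forall (a : C) (x y z : V), ip (a *: x + y) z = a * ip x z + ip y z),
      (forall x y : V, ip y x = (ip x y)^*),
      (forall x : V, 0 <= ip x x) &
      (forall x : V, ip x x = 0 -> x = 0)].

Definition hnorm (x : V) : R := Num.sqrt (complex.Re (ip x x)).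

Definition hcauchy (u : nat -> V) : Prop :=
  forall e : R, 0 < e -> exists N : nat,
    forall m n : nat, (N <= m)%N -> (N <= n)%N -> hnorm (u m - u n) < e.

Definition hconverges (u : nat -> V) (l : V) : Prop :=
  forall e : R, 0 < e -> exists N : nat,
    forall n : nat, (N <= n)%N -> hnorm (u n - l) < e.

Definition hcomplete : Prop :=
  forall u : nat -> V, hcauchy u -> exists l : V, hconverges u l.

Definition hseparable : Prop :=
  exists d : nat -> V, forall (x : V) (e : R), 0 < e ->
    exists n : nat, hnorm (x - d n) < e.

Definition separable_hilbert_space : Prop :=
  [/\ inner_product, hcomplete & hseparable].

Definition bounded_linear (T : V -> V) : Prop :=
  linear T /\ exists c : R, forall x : V, hnorm (T x) <= c * hnorm x.

Definition orth_proj (P : V -> V) : Prop :=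
  [/\ bounded_linear P,
      (forall x : V, P (P x) = P x) &
      (forall x y : V, ip (P x) y = ip x (P y))].

Definition unitary_with_inverse (U Uinv : V -> V) : Prop :=
  [/\ bounded_linear U,
      (forall x y : V, ip (U x) (U y) = ip x y),
      cancel U Uinv & cancel Uinv U].

Definition compl_op (P : V -> V) : V -> V := fun x => x - P x.

Definition Ksub (A B : V -> V) : set V :=
  [set x | (exists y, A y = x) /\ B x = 0].

Definition orthonormal_basis (K B : set V) : Prop :=
  [/\ B `<=` K,
      (forall b, B b -> ip b b = 1),
      (forall b b', B b -> B b' -> b <> b' -> ip b b' = 0) &
      (forall x, K x -> (forall b, B b -> ip x b = 0) -> x = 0)].

Definition same_hilbert_dim (K1 K2 : set V) : Prop :=
  exists B1 B2 : set V,
    [/\ orthonormal_basis K1 B1, orthonormal_basis K2 B2 & (B1 #= B2)%card].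

Definition unitarily_swappable (P Q : V -> V) : Prop :=
  exists U Uinv : V -> V,
    [/\ unitary_with_inverse U Uinv,
        (forall x, U (P (Uinv x)) = Q x) &
        (forall x, U (Q (Uinv x)) = P x)].

End Hilbert.

(* Main.v *)
Require Import Defs.
From mathcomp Require Import all_boot all_order all_algebra.
From mathcomp Require Import reals.
From mathcomp Require Import boolp classical_sets cardinality.
From mathcomp.real_closed Require Import complex.
From mathcomp Require Import ring lra.
Set Implicit Arguments. Unset Strict Implicit. Unset Printing Implicit Defensive.
Import Order.TTheory GRing.Theory Num.Theory.
Local Open Scope ring_scope. Local Open Scope complex_scope. Local Open Scope ring_scope.
Local Open Scope classical_set_scope.



Section IP.
Variable R : realType.
Local Notation C := (R[i]).
Variables (V : lmodType C) (ip : V -> V -> C).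
Hypothesis hip : inner_product ip.

Lemma ipDZl a x y z : ip (a *: x + y) z = a * ip x z + ip y z.
Proof. by case: hip. Qed.
Lemma ipC x y : ip y x = (ip x y)^*.
Proof. by case: hip. Qed.
Lemma ip_ge0 x : 0 <= ip x x.
Proof. by case: hip. Qed.
Lemma ip_eq0 x : ip x x = 0 -> x = 0.
Proof. by case: hip => _ _ _; apply. Qed.

Lemma ip0l z : ip 0 z = 0.
Proof.
have := ipDZl 1 0 0 z; rewrite scaler0 addr0 mul1r => h.
by apply: (@addrI _ (ip 0 z)); rewrite -h addr0.
Qed.
Lemma ipDl x y z : ip (x + y) z = ip x z + ip y z.
Proof. by rewrite -[x]scale1r ipDZl mul1r scale1r. Qed.
Lemma ipZl a x z : ip (a *: x) z = a * ip x z.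
Proof. by rewrite -[a *: x]addr0 ipDZl ip0l addr0. Qed.
Lemma ipNl x z : ip (- x) z = - ip x z.
Proof. by rewrite -scaleN1r ipZl mulN1r. Qed.
Lemma ipBl x y z : ip (x - y) z = ip x z - ip y z.
Proof. by rewrite ipDl ipNl. Qed.
Lemma ip0r z : ip z 0 = 0.
Proof. by rewrite ipC ip0l conjC0. Qed.
Lemma ipDr x y z : ip z (x + y) = ip z x + ip z y.
Proof. by rewrite ipC ipDl rmorphD [ip z x]ipC [ip z y]ipC. Qed.
Lemma ipZr a x z : ip z (a *: x) = a^* * ip z x.
Proof. by rewrite ipC ipZl rmorphM [ip z x]ipC. Qed.
Lemma ipNr x z : ip z (- x) = - ip z x.
Proof. by rewrite ipC ipNl rmorphN [ip z x]ipC. Qed.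
Lemma ipBr x y z : ip z (x - y) = ip z x - ip z y.
Proof. by rewrite ipDr ipNr. Qed.
Lemma ip_suml I (r : seq I) (P : pred I) (F : I -> V) z :
  ip (\sum_(i <- r | P i) F i) z = \sum_(i <- r | P i) ip (F i) z.
Proof. by apply: (big_morph (fun x => ip x z)); [move=> a b; exact: ipDl | exact: ip0l]. Qed.
Lemma ip_sumr I (r : seq I) (P : pred I) (F : I -> V) z :
  ip z (\sum_(i <- r | P i) F i) = \sum_(i <- r | P i) ip z (F i).
Proof. by apply: (big_morph (fun x => ip z x)); [move=> a b; exact: ipDr | exact: ip0r]. Qed.

Lemma conjR (r : R) : (r%:C)^* = r%:C :> C.
Proof. by apply: conj_Creal; apply/complex_realP; exists r. Qed.

Definition nsq x : R := complex.Re (ip x x).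
Lemma ipxx x : ip x x = (nsq x)%:C.
Proof.
have := ip_ge0 x; rewrite /nsq; case: (ip x x) => a b.
by rewrite lecE /= => /andP[/eqP -> _].
Qed.
Lemma nsq_ge0 x : 0 <= nsq x.
Proof. by have := ip_ge0 x; rewrite ipxx lecR. Qed.
Lemma nsq_eq0 x : nsq x = 0 -> x = 0.
Proof. by move=> h; apply: ip_eq0; rewrite ipxx h. Qed.

Local Notation hn := (hnorm ip).
Lemma hnE x : hn x = Num.sqrt (nsq x). Proof. by []. Qed.
Lemma hn_ge0 x : 0 <= hn x. Proof. exact: sqrtr_ge0. Qed.
Lemma hn_sqr x : hn x ^+ 2 = nsq x.
Proof. by rewrite /hnorm sqr_sqrtr // nsq_ge0. Qed.
Lemma hn_eq0 x : hn x = 0 -> x = 0.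
Proof. by move=> h; apply: nsq_eq0; rewrite -hn_sqr h expr0n. Qed.
Lemma hn0 : hn 0 = 0.
Proof. by rewrite /hnorm /nsq ip0l /= sqrtr0. Qed.

Lemma CS_sq x y : `|ip x y| ^+ 2 <= ip x x * ip y y.
Proof.
have [->|y0] := eqVneq y 0; first by rewrite ip0r normr0 expr0n /= ip0r mulr0.
set c := ip x y; set r := ip y y.
have rr : r^* = r by rewrite /r ipxx conjR. 
have r0 : 0 < r.
  rewrite lt_def ip_ge0 andbT; apply/eqP => /ip_eq0; exact/eqP.
have := ip_ge0 (r *: x - c *: y).
rewrite ipBl !ipBr !ipZl !ipZr -/r -/c [ip y x]ipC -/c rr.
have -> : r * (r * ip x x) - r * (c^* * c) - (c * (r * c^*) - c * (c^* * r))
   = r * (r * ip x x - c * c^*) by ring.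
rewrite pmulr_rge0 // subr_ge0 -normCK => h.
by rewrite mulrC.
Qed.

Lemma ReD (a b : C) : complex.Re (a + b) = complex.Re a + complex.Re b.
Proof. by case: a; case: b. Qed.
Lemma ReJ (a : C) : complex.Re (a^*) = complex.Re a.
Proof. by case: a. Qed.
Lemma ReR (r : R) : complex.Re (r%:C) = r. Proof. by []. Qed.

Lemma ReRX (r : R) : complex.Re ((r%:C) ^+ 2) = r ^+ 2.
Proof. rewrite -rmorphXn; reflexivity. Qed.
Lemma R0C : (0 : R)%:C = 0 :> C.
Proof. reflexivity. Qed.
Lemma Re0 : complex.Re (0 : C) = 0.
Proof. reflexivity. Qed.
Lemma ReN (a : C) : complex.Re (- a) = - complex.Re a.
Proof. by case: a. Qed.

Definition cabs (a : C) : R := complex.Re `|a|.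
Lemma normC_cabs a : `|a| = (cabs a)%:C.
Proof. by rewrite /cabs RRe_real // normr_real. Qed.
Lemma cabs_ge0 a : 0 <= cabs a.
Proof. by rewrite -ler0c -normC_cabs. Qed.
Lemma Re_le_cabs a : complex.Re a <= cabs a.
Proof.
rewrite -lecR -normC_cabs; apply: le_trans (normc_ge_Re a).
by rewrite lecR ler_norm.
Qed.
Lemma cabs_mul a b : cabs (a * b) = cabs a * cabs b.
Proof. by apply: complexI; rewrite rmorphM -!normC_cabs normrM. Qed.
Lemma cabs_eq0 a : cabs a = 0 -> a = 0.
Proof. by move=> h; apply/eqP; rewrite -normr_eq0 normC_cabs h. Qed.

Lemma CS x y : cabs (ip x y) <= hn x * hn y.
Proof.
rewrite -lecR -normC_cabs.
have h0 : 0 <= ((hn x * hn y)%:C : C) by rewrite lecR mulr_ge0 ?hn_ge0.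
rewrite -(@ler_pXn2r _ 2) //; last by rewrite -topredE /=.
have -> : ((hn x * hn y)%:C : C) ^+ 2 = ip x x * ip y y.
  by rewrite !ipxx -rmorphM -rmorphXn exprMn !hn_sqr.
exact: CS_sq.
Qed.

Lemma nsqD x y : nsq (x + y) = nsq x + nsq y + complex.Re (ip x y) *+ 2.
Proof.
rewrite /nsq ipDl !ipDr !ReD [ip y x]ipC ReJ; lra.
Qed.

Lemma hn_triangle x y : hn (x + y) <= hn x + hn y.
Proof.
rewrite [hn (x + y)]hnE -(@ger0_norm _ (hn x + hn y)); last by rewrite addr_ge0 ?hn_ge0.
rewrite -sqrtr_sqr ler_sqrt ?sqr_ge0 // nsqD sqrrD !hn_sqr.
have := le_trans (Re_le_cabs (ip x y)) (CS x y); lra.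
Qed.

Lemma nsqZ a x : nsq (a *: x) = cabs a ^+ 2 * nsq x.
Proof.
by rewrite /nsq ipZl ipZr mulrA -normCK normC_cabs ipxx -!rmorphXn -rmorphM.
Qed.
Lemma hnZ a x : hn (a *: x) = cabs a * hn x.
Proof.
by rewrite !hnE nsqZ sqrtrM ?sqr_ge0 // sqrtr_sqr ger0_norm // cabs_ge0.
Qed.
Lemma hnN x : hn (- x) = hn x.
Proof. by rewrite !hnE /nsq ipNl ipNr opprK. Qed.
Lemma hnB x y : hn (x - y) = hn (y - x).
Proof. by rewrite -hnN opprB. Qed.
Lemma hn_triangleB x y z : hn (x - z) <= hn (x - y) + hn (y - z).
Proof. by have := hn_triangle (x - y) (y - z); rewrite addrA subrK. Qed.
Lemma ReCS x y : complex.Re (ip x y) <= hn x * hn y.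
Proof. exact: le_trans (Re_le_cabs _) (CS x y). Qed.
End IP.


Section Lin.
Variable R : realType.
Local Notation C := (R[i]).
Variables (V : lmodType C).
Lemma lin0 (T : V -> V) : linear T -> T 0 = 0.
Proof.
move=> hT; have := hT 1 0 0; rewrite scaler0 addr0 scale1r => h.
by apply: (@addrI _ (T 0)); rewrite -h addr0.
Qed.
Lemma linD (T : V -> V) : linear T -> forall x y, T (x + y) = T x + T y.
Proof. by move=> hT x y; have := hT 1 x y; rewrite !scale1r. Qed.
Lemma linZ (T : V -> V) : linear T -> forall a x, T (a *: x) = a *: T x.
Proof. by move=> hT a x; have := hT a x 0; rewrite !addr0 lin0 // addr0. Qed.
Lemma linN (T : V -> V) : linear T -> forall x, T (- x) = - T x.
Proof. by move=> hT x; rewrite -scaleN1r linZ // scaleN1r. Qed.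
Lemma linB (T : V -> V) : linear T -> forall x y, T (x - y) = T x - T y.
Proof. by move=> hT x y; rewrite linD // linN. Qed.
Lemma linP (T : V -> V) : (forall a x y, T (a *: x + y) = a *: T x + T y) -> linear T.
Proof. by move=> h a x y; exact: h. Qed.
End Lin.

Lemma le_eps (R : realType) (a : R) : (forall e, 0 < e -> a <= e) -> a <= 0.
Proof.
move=> h; rewrite leNgt; apply/negP => a0.
have := h (a / 2%:R); rewrite divr_gt0 // => /(_ isT); lra.
Qed.

Section Limits.
Variable R : realType.
Local Notation C := (R[i]).
Variables (V : lmodType C) (ip : V -> V -> C).
Hypothesis hip : inner_product ip.
Local Notation hn := (hnorm ip).
Local Notation cvg := (hconverges ip).

Definition ccv (a : nat -> C) (z : C) :=
  forall e : R, 0 < e -> exists N, forall n, (N <= n)%N -> cabs (a n - z) < e.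

Lemma cabs_triangle (a b : C) : cabs (a + b) <= cabs a + cabs b.
Proof. by rewrite -lecR rmorphD -!normC_cabs ler_normD. Qed.
Lemma cabsN (a : C) : cabs (- a) = cabs a.
Proof. by apply: complexI; rewrite -!normC_cabs normrN. Qed.
Lemma cabsJ (a : C) : cabs (a^*) = cabs a.
Proof. by apply: complexI; rewrite -!normC_cabs norm_conjC. Qed.
Lemma cabs0 : cabs (0 : C) = 0.
Proof. by apply: complexI; rewrite -!normC_cabs normr0. Qed.

Lemma ccv_uniq a z1 z2 : ccv a z1 -> ccv a z2 -> z1 = z2.
Proof.
move=> h1 h2; apply/eqP; rewrite -subr_eq0; apply/eqP; apply: cabs_eq0.
apply/eqP; rewrite eq_le cabs_ge0 andbT; apply: le_eps => e e0.
have e2 : 0 < e / 2%:R by rewrite divr_gt0.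
have [N1 hN1] := h1 _ e2; have [N2 hN2] := h2 _ e2.
have := hN1 (maxn N1 N2) (leq_maxl _ _); have := hN2 (maxn N1 N2) (leq_maxr _ _).
have := cabs_triangle (z1 - a (maxn N1 N2)) (a (maxn N1 N2) - z2).
rewrite addrA subrK -[cabs (z1 - _)]cabsN opprB; lra.
Qed.

Lemma ccv_cst a z N : (forall n, (N <= n)%N -> a n = z) -> ccv a z.
Proof. by move=> h e e0; exists N => n /h ->; rewrite subrr cabs0. Qed.

Lemma cvg_uniq u l1 l2 : cvg u l1 -> cvg u l2 -> l1 = l2.
Proof.
move=> h1 h2; apply/eqP; rewrite -subr_eq0; apply/eqP; apply: (hn_eq0 hip).
apply/eqP; rewrite eq_le hn_ge0 andbT; apply: le_eps => e e0.
have e2 : 0 < e / 2%:R by rewrite divr_gt0.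
have [N1 hN1] := h1 _ e2; have [N2 hN2] := h2 _ e2.
have := hN1 (maxn N1 N2) (leq_maxl _ _); have := hN2 (maxn N1 N2) (leq_maxr _ _).
have := hn_triangleB hip l1 (u (maxn N1 N2)) l2.
rewrite (hnB hip l1 (u _)); lra.
Qed.

Lemma cvg_cst l : cvg (fun _ => l) l.
Proof. by move=> e e0; exists 0%N => n _; rewrite subrr hn0. Qed.

Lemma cvg_ext u v l : (forall n, u n = v n) -> cvg u l -> cvg v l.
Proof. by move=> h hu e /hu[N hN]; exists N => n /hN; rewrite h. Qed.

Lemma cvgD u v a b : cvg u a -> cvg v b -> cvg (fun n => u n + v n) (a + b).
Proof.
move=> hu hv e e0; have e2 : 0 < e / 2%:R by rewrite divr_gt0.
have [N1 hN1] := hu _ e2; have [N2 hN2] := hv _ e2.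
exists (maxn N1 N2) => n hn.
have := hN1 n (leq_trans (leq_maxl _ _) hn); have := hN2 n (leq_trans (leq_maxr _ _) hn).
have := hn_triangle hip (u n - a) (v n - b).
have -> : u n - a + (v n - b) = u n + v n - (a + b) by rewrite opprD addrACA.
lra.
Qed.

Lemma cvgZ u a c : cvg u a -> cvg (fun n => c *: u n) (c *: a).
Proof.
move=> hu e e0.
have e1 : 0 < e / (cabs c + 1) by rewrite divr_gt0 // ltr_pwDr // cabs_ge0.
have [N hN] := hu _ e1; exists N => n /hN h.
rewrite -scalerBr (hnZ hip).
have c0 := cabs_ge0 c.
apply: (@le_lt_trans _ _ ((cabs c + 1) * hn (u n - a))).
  by rewrite ler_wpM2r ?hn_ge0 // lerDl.
by rewrite mulrC -ltr_pdivlMr // ltr_pwDr.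
Qed.

Lemma cvgN u a : cvg u a -> cvg (fun n => - u n) (- a).
Proof.
move=> /(cvgZ (-1)); rewrite scaleN1r; apply: cvg_ext => n; exact: scaleN1r.
Qed.

Lemma cvgB u v a b : cvg u a -> cvg v b -> cvg (fun n => u n - v n) (a - b).
Proof. by move=> hu /cvgN hv; exact: cvgD. Qed.

Definition bnd (T : V -> V) := exists c : R, forall x, hn (T x) <= c * hn x.

Lemma cvg_lin T u l : linear T -> bnd T -> cvg u l -> cvg (fun n => T (u n)) (T l).
Proof.
move=> lT [c hc] hu e e0.
have c1 : 0 < `|c| + 1 by rewrite ltr_pwDr.
have e1 : 0 < e / (`|c| + 1) by rewrite divr_gt0.
have [N hN] := hu _ e1; exists N => n /hN h.
rewrite -linB //; apply: le_lt_trans (hc _) _.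
apply: (@le_lt_trans _ _ ((`|c| + 1) * hn (u n - l))).
  by rewrite ler_wpM2r ?hn_ge0 // (le_trans (ler_norm c)) // lerDl.
by rewrite mulrC -ltr_pdivlMr.
Qed.

Lemma ccv_ipl u l y : cvg u l -> ccv (fun n => ip (u n) y) (ip l y).
Proof.
move=> hu e e0.
have c1 : 0 < hn y + 1 by rewrite ltr_pwDr // hn_ge0.
have e1 : 0 < e / (hn y + 1) by rewrite divr_gt0.
have [N hN] := hu _ e1; exists N => n /hN h.
rewrite -(ipBl hip); apply: le_lt_trans (CS hip _ _) _.
apply: (@le_lt_trans _ _ (hn (u n - l) * (hn y + 1))).
  by rewrite ler_wpM2l ?hn_ge0 // lerDl.
by rewrite -ltr_pdivlMr.
Qed.

Lemma ccv_ipr u l y : cvg u l -> ccv (fun n => ip y (u n)) (ip y l).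
Proof.
move=> /(ccv_ipl y) h e /h[N hN]; exists N => n /hN.
by rewrite [ip y (u n)](ipC hip) [ip y l](ipC hip) -rmorphB cabsJ.
Qed.

Lemma lim_ip_eq u v l m x y : cvg u l -> cvg v m ->
  (forall n, ip (u n) y = ip x (v n)) -> ip l y = ip x m.
Proof.
move=> hu hv h; apply: (@ccv_uniq (fun n => ip (u n) y)); first exact: ccv_ipl.
by move=> e /(ccv_ipr x hv)[N hN]; exists N => n /hN; rewrite h.
Qed.

Lemma lim_ip_cst u l y z N : cvg u l ->
  (forall n, (N <= n)%N -> ip (u n) y = z) -> ip l y = z.
Proof. by move=> hu h; apply: (ccv_uniq (ccv_ipl y hu)); exact: ccv_cst h. Qed.

Definition hclosed (S : set V) := forall u l, (forall n, S (u n)) -> cvg u l -> S l.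

Lemma closed_eq T1 T2 : linear T1 -> bnd T1 -> linear T2 -> bnd T2 ->
  hclosed [set x | T1 x = T2 x].
Proof.
move=> l1 b1 l2 b2 u l hS hu.
have h1 := cvg_lin l1 b1 hu; have h2 := cvg_lin l2 b2 hu.
apply: (cvg_uniq h1); apply: cvg_ext h2 => n; exact/esym/hS.
Qed.

Lemma bnd_id : bnd id.
Proof. by exists 1 => x; rewrite mul1r. Qed.
Lemma lin_id : linear (@id V).
Proof. by []. Qed.
Lemma lin0f : linear (fun _ : V => 0 : V).
Proof. by move=> a x y; rewrite scaler0 addr0. Qed.
Lemma bnd0 : bnd (fun _ => 0).
Proof. by exists 0 => x; rewrite mul0r hn0. Qed.

Lemma closed_orth (S : set V) : hclosed [set x | forall y, S y -> ip x y = 0].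
Proof.
move=> u l hS hu y Sy; apply: (@lim_ip_cst u l y 0 0) => // n _; exact: hS.
Qed.

Lemma closedI (S1 S2 : set V) : hclosed S1 -> hclosed S2 -> hclosed (S1 `&` S2).
Proof.
move=> h1 h2 u l hS hu; split.
  by apply: h1 hu => n; case: (hS n).
by apply: h2 hu => n; case: (hS n).
Qed.
End Limits.


Lemma mono_cauchy (R : realType) (s : nat -> R) B :
  (forall n, s n <= B) -> (forall n m, (n <= m)%N -> s n <= s m) ->
  forall e, 0 < e -> exists N, forall m, (N <= m)%N -> s m - s N < e.
Proof.
move=> hB hm e e0.
have hs : has_sup (range s).
  split; first by exists (s 0%N), 0%N.
  by exists B => _ [n _ <-].
have [_ [N _ <-] hN] := sup_adherent e0 hs.
exists N => m _.
have : s m <= sup (range s) by apply: sup_upper_bound => //; exists m.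
lra.
Qed.

Section Fourier.
Variable R : realType.
Local Notation C := (R[i]).
Variables (V : lmodType C) (ip : V -> V -> C).
Hypothesis hip : inner_product ip.
Local Notation hn := (hnorm ip).
Local Notation cvg := (hconverges ip).
Local Notation nsq := (nsq ip).

Definition onz (e : nat -> V) :=
  (forall n, e n != 0 -> ip (e n) (e n) = 1) /\
  (forall n m, n != m -> ip (e n) (e m) = 0).

Lemma onz_nsq e n : onz e -> nsq (e n) = if e n != 0 then 1 else 0.
Proof.
case=> h1 _; case: ifP => [/h1|/negbFE/eqP->]; rewrite /nsq.
  by move=> ->.
by rewrite (ip0l hip).
Qed.

Lemma onz_nsq_le1 e n : onz e -> nsq (e n) <= 1.
Proof. by move=> /(onz_nsq n) ->; case: ifP. Qed.

Lemma ip_sum_onz (u : nat -> V) (c d : nat -> C) (s : seq nat) : onz u -> uniq s ->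
  ip (\sum_(i <- s) c i *: u i) (\sum_(i <- s) d i *: u i)
  = \sum_(i <- s) c i * (d i)^* * ip (u i) (u i).
Proof.
move=> [_ ho] us; rewrite (ip_suml hip); apply: eq_big_seq => i ii.
rewrite (ipZl hip) (ip_sumr hip) (bigD1_seq i) //= big1 ?addr0.
  by rewrite (ipZr hip) !mulrA.
by move=> j ji; rewrite (ipZr hip) ho ?mulr0 // eq_sym.
Qed.

Lemma nsq_sum (u : nat -> V) (c : nat -> C) (s : seq nat) : onz u -> uniq s ->
  nsq (\sum_(i <- s) c i *: u i) = \sum_(i <- s) cabs (c i) ^+ 2 * nsq (u i).
Proof.
move=> ou us; rewrite {1}/nsq ip_sum_onz //.
rewrite (big_morph (@complex.Re R) (@ReD R) (erefl (complex.Re (0 : C)))).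
apply: eq_bigr => i _.
by rewrite -normCK normC_cabs (ipxx hip) -rmorphXn -rmorphM.
Qed.

Definition psum (e u : nat -> V) (x : V) (N : nat) : V :=
  \sum_(0 <= i < N) ip x (e i) *: u i.

Section Coef.
Variables (e u : nat -> V).
Hypotheses (oe : onz e) (ou : onz u).

Definition wsum (x : V) (N : nat) : R := \sum_(0 <= i < N) cabs (ip x (e i)) ^+ 2.

Lemma coef_zero x i : e i = 0 -> ip x (e i) = 0.
Proof. by move=> ->; rewrite (ip0r hip). Qed.

Lemma wsum_mono x n m : (n <= m)%N -> wsum x n <= wsum x m.
Proof.
move=> nm; rewrite /wsum (@big_cat_nat _ _ _ n 0 m) // lerDl.
by apply: sumr_ge0 => i _; rewrite sqr_ge0.
Qed.

Lemma bessel x N : wsum x N <= nsq x.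
Proof.
have h := nsq_ge0 hip (x - psum e e x N).
have E : nsq (x - psum e e x N) = nsq x - wsum x N.
  rewrite /nsq (ipBl hip) !(ipBr hip) /psum ip_sum_onz ?iota_uniq //.
  rewrite [ip x (\sum_(_ <= _ < _) _)](ip_sumr hip) [ip (\sum_(_ <= _ < _) _) x](ipC hip).
  rewrite [ip x (\sum_(_ <= _ < _) _)](ip_sumr hip).
  have -> : \sum_(0 <= i < N) ip x (ip x (e i) *: e i)
          = \sum_(0 <= i < N) ip x (e i) * (ip x (e i))^* * ip (e i) (e i).
    apply: eq_bigr => i _; rewrite (ipZr hip) mulrC.
    have [ei|/(proj1 oe) ->] := eqVneq (e i) 0; last by rewrite mulr1.
    by rewrite coef_zero // !mul0r.
  set S := \sum_(_ <= _ < _) _.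
  rewrite !ReD !ReN ReD ReN ReJ.
  have -> : complex.Re S = wsum x N.
    rewrite /S (big_morph (@complex.Re R) (@ReD R) (erefl (complex.Re (0 : C)))).
    rewrite /wsum; apply: eq_bigr => i _.
    rewrite -normCK normC_cabs.
    have [ei|/(proj1 oe) ->] := eqVneq (e i) 0; last by rewrite mulr1 ReRX.
    rewrite coef_zero // cabs0.
    by rewrite R0C !expr2 !mul0r Re0.
  by rewrite /nsq subrr subr0.
by rewrite -subr_ge0 -E.
Qed.

Lemma psum_diff x n m : (n <= m)%N ->
  nsq (psum e u x m - psum e u x n) <= wsum x m - wsum x n.
Proof.
move=> nm; rewrite /psum /wsum (@big_cat_nat _ _ _ n 0 m) //.
rewrite (@big_cat_nat _ _ _ n 0 m) // [X in nsq (X - _)]addrC addrK.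
rewrite [X in _ <= X - _]addrC addrK nsq_sum ?iota_uniq //.
rewrite ler_sum // => i _.
by rewrite ler_piMr ?sqr_ge0 // onz_nsq_le1.
Qed.

Hypothesis hc : hcomplete ip.

Lemma psum_cvg x : exists l, cvg (psum e u x) l.
Proof.
apply: hc => eps eps0.
have e2 : 0 < eps ^+ 2 by rewrite exprn_gt0.
have [N hN] := mono_cauchy (bessel x) (@wsum_mono x) e2.
exists N => m n Nm Nn.
suff key : forall a b, (N <= a)%N -> (a <= b)%N -> hn (psum e u x b - psum e u x a) < eps.
  case: (leqP m n) => mn.
    by rewrite (hnB hip); apply: key.
  by apply: key => //; exact: ltnW.
move=> a b Na ab.
rewrite -(@ltr_pXn2r _ 2) // ?hn_ge0 ?ltW //.
  rewrite (hn_sqr hip); apply: le_lt_trans (psum_diff x ab) _.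
  apply: le_lt_trans (hN b (leq_trans Na ab)).
  by rewrite lerD2l lerN2 wsum_mono.
by rewrite -topredE /= hn_ge0.
by rewrite -topredE /= ltW.
Qed.
End Coef.

Definition Phi (e u : nat -> V) (x : V) : V := xget 0 [set l | cvg (psum e u x) l].

Lemma PhiP e u x : onz e -> onz u -> hcomplete ip -> cvg (psum e u x) (Phi e u x).
Proof. by move=> oe ou hc; apply: xgetPex; exact: psum_cvg. Qed.

End Fourier.


Section PhiProps.
Variable R : realType.
Local Notation C := (R[i]).
Variables (V : lmodType C) (ip : V -> V -> C).
Hypothesis hip : inner_product ip.
Hypothesis hc : hcomplete ip.
Local Notation hn := (hnorm ip).
Local Notation cvg := (hconverges ip).
Local Notation onz := (onz ip).
Local Notation Phi := (Phi ip).
Local Notation psum := (psum ip).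

Lemma cvg_ev u l N : (forall n, (N <= n)%N -> u n = l) -> cvg u l.
Proof. by move=> h e e0; exists N => n /h ->; rewrite subrr hn0. Qed.

Lemma PhiE e u x l : onz e -> onz u -> cvg (psum e u x) l -> Phi e u x = l.
Proof. by move=> oe ou h; apply: (cvg_uniq hip (PhiP hip x oe ou hc)). Qed.

Lemma Phi_coef_eq e e' u x y : onz e -> onz e' -> onz u ->
  (forall i, ip x (e i) = ip y (e' i)) -> Phi e u x = Phi e' u y.
Proof.
move=> oe oe' ou h; apply: PhiE => //; apply: cvg_ext (PhiP hip y oe' ou hc) => n.
by rewrite /psum; apply: eq_bigr => i _; rewrite h.
Qed.

Lemma Phi_lin e u : onz e -> onz u -> linear (Phi e u).
Proof.
move=> oe ou a x y; apply: PhiE => //.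
have h := cvgD hip (cvgZ hip a (PhiP hip x oe ou hc)) (PhiP hip y oe ou hc).
apply: cvg_ext h => n; rewrite /psum scaler_sumr -big_split /=.
by apply: eq_bigr => i _; rewrite (ipDl hip) (ipZl hip) scalerDl scalerA.
Qed.

Lemma Phi_adj e u x y : onz e -> onz u -> ip (Phi e u x) y = ip x (Phi u e y).
Proof.
move=> oe ou; apply: (lim_ip_eq hip (PhiP hip x oe ou hc) (PhiP hip y ou oe hc)) => n.
rewrite /psum (ip_suml hip) (ip_sumr hip); apply: eq_bigr => i _.
by rewrite (ipZl hip) (ipZr hip) -(ipC hip) mulrC.
Qed.

Lemma Phi_zero e u x : onz e -> onz u -> (forall i, ip x (e i) = 0) -> Phi e u x = 0.
Proof.
move=> oe ou h; apply: PhiE => //; apply: (cvg_ev (N:=0)) => n _.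
by rewrite /psum big1 // => i _; rewrite h scale0r.
Qed.

Lemma Phi_basis u e m : onz u -> onz e ->
  Phi u e (u m) = if u m != 0 then e m else 0.
Proof.
move=> ou oe; apply: PhiE => //; apply: (cvg_ev (N:=m.+1)) => n mn.
have mi : m \in index_iota 0 n by rewrite mem_index_iota.
rewrite /psum (bigD1_seq m) ?iota_uniq //= big1 ?addr0; last first.
  by move=> i im; rewrite (proj2 ou) ?scale0r // eq_sym.
have [->|um] := eqVneq (u m) 0; first by rewrite (ip0l hip) scale0r.
by rewrite (proj1 ou) // scale1r.
Qed.

Definition subsp (K : set V) :=
  [/\ K 0, (forall x y, K x -> K y -> K (x + y)) & (forall a x, K x -> K (a *: x))].

Lemma subsp_sum (K : set V) (s : seq nat) (F : nat -> V) : subsp K ->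
  (forall i, K (F i)) -> K (\sum_(i <- s) F i).
Proof.
move=> [K0 KD KZ] hF; elim: s => [|i s IH]; first by rewrite big_nil.
by rewrite big_cons; apply: KD.
Qed.

Lemma Phi_in e u x (K : set V) : onz e -> onz u -> subsp K -> hclosed ip K ->
  (forall i, K (u i)) -> K (Phi e u x).
Proof.
move=> oe ou sK cK hu; apply: cK (PhiP hip x oe ou hc) => n.
apply: subsp_sum => // i; case: sK => _ _; apply; exact: hu.
Qed.

Definition supp_eq (v w : nat -> V) := forall m, (v m == 0) = (w m == 0).

Lemma Phi_comp v w u x : onz v -> onz w -> onz u -> supp_eq v w ->
  Phi w u (Phi v w x) = Phi v u x.
Proof.
move=> ov ow ou hs; apply: Phi_coef_eq => // i.
rewrite Phi_adj // Phi_basis //.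
case: ifP => [_ //|/negbFE wi].
have vi : v i = 0 by apply/eqP; rewrite hs wi.
by rewrite vi !(ip0r hip).
Qed.
End PhiProps.


Lemma bij_ext (T U : choiceType) (u0 : U) (A : set T) (B : set U) : (A #= B)%card ->
  exists h : T -> U, [/\ (forall a, A a -> B (h a)),
    (forall a a', A a -> A a' -> h a = h a' -> a = a') &
    (forall b, B b -> exists a, A a /\ h a = b)].
Proof.
move=> /card_bijP[f [g fg gf]].
pose h x := if pselect (x \in A) is left p then sval (f (exist _ x p)) else u0.
have hE x (p : x \in A) : h x = sval (f (exist _ x p)).
  rewrite /h; case: pselect => [p'|]; last by [].
  by rewrite (Prop_irrelevance p p').
exists h; split.
- move=> a Aa; have p : a \in A by exact: mem_set.
  by rewrite (hE a p); apply: set_mem; exact: (svalP (f (exist _ a p))).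
- move=> a a' Aa Aa'; have p : a \in A by exact: mem_set.
  have p' : a' \in A by exact: mem_set.
  rewrite (hE a p) (hE a' p') => /val_inj /(congr1 g); rewrite !fg.
  by move=> /(congr1 sval).
- move=> b Bb; have q : b \in B by exact: mem_set.
  exists (sval (g (exist _ b q))); split; first exact/set_mem/(svalP (g _)).
  have p := svalP (g (exist _ b q)).
  rewrite (hE _ p).
  have -> : exist (fun x => x \in A) (sval (g (exist _ b q))) p = g (exist _ b q).
    by apply: val_inj.
  by rewrite gf.
Qed.

Lemma sq_lt1 (R : realType) (a : R) : 0 <= a -> a < 1 -> a ^+ 2 < 1.
Proof. move=> h0 h1; rewrite expr2; nra. Qed.

Section ONB.
Variable R : realType.
Local Notation C := (R[i]).
Variables (V : lmodType C) (ip : V -> V -> C).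
Hypothesis hip : inner_product ip.
Local Notation hn := (hnorm ip).
Local Notation nsq := (nsq ip).
Local Notation onz := (onz ip).

Definition ONS (K : set V) (B : set V) :=
  [/\ B `<=` K, (forall b, B b -> ip b b = 1) &
      (forall b b', B b -> B b' -> b <> b' -> ip b b' = 0)].

Lemma normalize x : x != 0 -> exists2 c : C, c != 0 & ip (c *: x) (c *: x) = 1.
Proof.
move=> x0; have h0 : hn x != 0 by apply: contra_neq x0; exact: (hn_eq0 hip).
exists ((hn x)^-1)%:C.
  by apply: contra_neq h0 => /complexI /eqP; rewrite invr_eq0 => /eqP.
rewrite (ipZl hip) (ipZr hip) conjR (ipxx hip) -(hn_sqr hip) -!rmorphM.
by rewrite mulrA expr2 mulrACA mulVf // mul1r.
Qed.

Lemma onb_exists (K : set V) : subsp K -> exists B, orthonormal_basis ip K B.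
Proof.
move=> sK.
have hZ : forall F, F `<=` ONS K -> total_on F subset -> ONS K (\bigcup_(X in F) X).
  move=> F FP Ft; split.
  - by move=> x [X FX Xx]; case: (FP X FX) => + _ _; apply.
  - by move=> b [X FX Xb]; case: (FP X FX) => _ + _; apply.
  - move=> b b' [X FX Xb] [Y FY Yb']; case: (Ft X Y FX FY) => [XY|YX].
    + by case: (FP Y FY) => _ _; apply => //; exact: XY.
    + by case: (FP X FX) => _ _; apply => //; exact: YX.
have [A [[AK A1 A0] Amax]] := Zorn_bigcup hZ.
exists A; split => // x Kx xA; apply/eqP; apply/negP => /negP x0.
have [c c0 hc] := normalize x0.
have Ay : ~ A (c *: x).
  move=> /xA; rewrite (ipZr hip) => /eqP; rewrite mulf_eq0 conjC_eq0 (negbTE c0) /=.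
  move=> /eqP h; move: hc; rewrite (ipZl hip) (ipZr hip) h !mulr0 => /eqP.
  by rewrite eq_sym oner_eq0.
apply: (Amax (A `|` [set c *: x])).
  split; first by apply: subsetUl.
  by move=> h; apply: Ay; apply: h; right.
split.
- move=> y [/AK //|->]; case: sK => _ _; apply; exact: Kx.
- by move=> y [/A1 //|->].
- move=> b b' [Ab|->] [Ab'|->] bb'.
  + exact: A0.
  + by rewrite (ipZr hip) [ip b x](ipC hip) xA // conjC0 mulr0.
  + by rewrite (ipZl hip) xA // mulr0.
  + by [].
Qed.

Lemma onb_enum (K B : set V) : hseparable ip -> orthonormal_basis ip K B ->
  exists e : nat -> V,
    [/\ onz e, (forall n, e n != 0 -> B (e n)) & (forall b, B b -> exists n, e n = b)].
Proof.
move=> [d hd] [BK B1 B0 _].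
have h2 : (0 : R) < 2^-1 by rewrite invr_gt0.
pose code b := xget 0%N [set n | hn (b - d n) < 2^-1].
have codeP b : hn (b - d (code b)) < 2^-1.
  by apply: (@xgetPex _ 0%N [set n | hn (b - d n) < 2^-1]); exact: hd.
have codeI b b' : B b -> B b' -> code b = code b' -> b = b'.
  move=> Bb Bb' hcode; case: (eqVneq b b') => // /eqP neq; exfalso.
  have n2 : nsq (b - b') = 2.
    rewrite /nsq (ipBl hip) !(ipBr hip) B1 // B1 // B0 // B0 //; last by apply: nesym.
    by rewrite subr0 sub0r opprK ReD (_ : complex.Re (1 : C) = 1).
  have : hn (b - b') < 1.
    apply: le_lt_trans (hn_triangleB hip b (d (code b)) b') _.
    have hb := codeP b; have hb' := codeP b'; rewrite -hcode in hb'.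
    rewrite (hnB hip (d _)).
    have -> : (1 : R) = 2^-1 + 2^-1 by rewrite {1}(splitr 1) mul1r.
    exact: ltrD.
  move/(sq_lt1 (hn_ge0 ip _)); rewrite (hn_sqr hip) n2.
  by rewrite ltNge ler1n.
pose e n := xget 0 [set b | B b /\ code b = n].
have eP n : (e n = 0) \/ (B (e n) /\ code (e n) = n).
  case: (pselect (exists b, B b /\ code b = n)) => [ex|nex].
    by right; exact: xgetPex ex.
  by left; apply: xgetPN => b hb; apply: nex; exists b.
have nB0 : ~ B 0 by move=> /B1; rewrite (ip0l hip) => /eqP; rewrite eq_sym oner_eq0.
exists e; split.
- split.
    by move=> n; case: (eP n) => [->|[/B1 //]]; rewrite eqxx.
  move=> n m nm; case: (eP n) => [->|[Bn cn]]; first by rewrite (ip0l hip).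
  case: (eP m) => [->|[Bm cm]]; first by rewrite (ip0r hip).
  apply: B0 => // enm; move: nm; by rewrite -cn -cm enm eqxx.
- by move=> n; case: (eP n) => [->|[]//]; rewrite eqxx.
- move=> b Bb; exists (code b); case: (eP (code b)) => [e0|[Be ce]].
    exfalso; have : B (e (code b)).
      by have [] := @xgetPex _ 0 [set b0 | B b0 /\ code b0 = code b] (ex_intro _ b (conj Bb erefl)).
    by rewrite e0.
  by apply: codeI.
Qed.
End ONB.


Section Proj.
Variable R : realType.
Local Notation C := (R[i]).
Variables (V : lmodType C) (ip : V -> V -> C).
Hypothesis hip : inner_product ip.
Local Notation hn := (hnorm ip).
Local Notation onz := (onz ip).
Local Notation Phi := (Phi ip).

Definition isproj (K : set V) (p : V -> V) :=
  [/\ linear p, (forall x, K (p x)), (forall y, K y -> p y = y) &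
      (forall x y, ip (p x) y = ip x (p y))].

Lemma proj_idem K p : isproj K p -> forall x, p (p x) = p x.
Proof. by case=> _ h1 h2 _ x; apply: h2. Qed.

Lemma proj_orth K p x : isproj K p -> (forall y, K y -> ip x y = 0) -> p x = 0.
Proof.
move=> [_ h1 h2 h3] hx; apply: (ip_eq0 hip).
by rewrite h3 h2 //; apply: hx.
Qed.

Lemma proj_comm K p T : isproj K p -> linear T ->
  (forall x y, ip (T x) y = ip x (T y)) -> (forall y, K y -> K (T y)) ->
  subsp K -> forall x, T (p x) = p (T x).
Proof.
move=> [lp h1 h2 h3] lT sT KT [K0 KD KZ] x.
have Kw : K (T (p x) - p (T x)).
  rewrite -scaleN1r; apply: KD; first by apply: KT; apply: h1.
  by apply: KZ; exact: h1.
apply/eqP; rewrite -subr_eq0; apply/eqP; apply: (ip_eq0 hip).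
by rewrite (ipBl hip) sT h3 (h2 _ (KT _ Kw)) h3 (h2 _ Kw) -sT subrr.
Qed.

Lemma onb_proj (K B : set V) (e : nat -> V) : hcomplete ip -> subsp K -> hclosed ip K ->
  orthonormal_basis ip K B -> onz e -> (forall n, e n != 0 -> B (e n)) ->
  (forall b, B b -> exists n, e n = b) -> isproj K (Phi e e).
Proof.
move=> hc sK cK [BK B1 B0 Bc] oe eB Be.
have Ke i : K (e i).
  have [->|/eB /BK //] := eqVneq (e i) 0; by case: sK.
split.
- exact: Phi_lin.
- by move=> x; apply: Phi_in.
- move=> y Ky; apply/eqP; rewrite -subr_eq0; apply/eqP; apply: Bc.
    have sK2 := sK; case: sK2 => _ KD KZ; rewrite -scaleN1r; apply: KD; last by apply: KZ.
    by apply: Phi_in.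
  move=> b /Be[m <-]; rewrite (ipBl hip) Phi_adj // Phi_basis //.
  by case: ifP => [_|/negbFE/eqP ->]; rewrite ?subrr // !(ip0r hip) subrr.
- by move=> x y; apply: Phi_adj.
Qed.

Lemma idem_lin T : orth_proj ip T -> linear T.
Proof. by case=> [[]]. Qed.

Lemma Ksub_char P Q x : orth_proj ip P -> orth_proj ip Q ->
  Ksub P Q x <-> (P x = x /\ Q x = 0).
Proof.
move=> [_ hP _] _; split; first by case=> [[y <-] hq]; rewrite hP.
by case=> hx hq; split => //; exists x.
Qed.

Lemma Ksubc_char P Q x : orth_proj ip P -> orth_proj ip Q ->
  Ksub (compl_op P) (compl_op Q) x <-> (P x = 0 /\ Q x = x).
Proof.
move=> [[lP _] hP _] _; rewrite /Ksub /compl_op /=; split.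
  case=> [[y <-] /eqP]; rewrite subr_eq0 => /eqP <-; split => //.
  by rewrite linB // hP subrr.
case=> hx hq; split; first by exists x; rewrite hx subr0.
by rewrite hq subrr.
Qed.
End Proj.


Section Forward.
Variable R : realType.
Local Notation C := (R[i]).
Variables (V : lmodType C) (ip : V -> V -> C).
Hypothesis hip : inner_product ip.
Local Notation hn := (hnorm ip).

Lemma subsp_eq (T1 T2 : V -> V) : linear T1 -> linear T2 -> subsp [set x : V | T1 x = T2 x].
Proof.
move=> l1 l2; split => /=.
- by rewrite !lin0.
- by move=> x y h1 h2; rewrite !linD // h1 h2.
- by move=> a x h; rewrite !linZ // h.
Qed.

Lemma subspI (K1 K2 : set V) : subsp K1 -> subsp K2 -> subsp (K1 `&` K2).
Proof.
move=> [a1 b1 c1] [a2 b2 c2]; split.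
- by split.
- by move=> x y [? ?] [? ?]; split; [apply: b1|apply: b2].
- by move=> a x [? ?]; split; [apply: c1|apply: c2].
Qed.

Lemma Ksub_eq P Q : orth_proj ip P -> orth_proj ip Q ->
  Ksub P Q = [set x | P x = x] `&` [set x | Q x = 0].
Proof.
move=> oP oQ; apply/funext => x; apply/propext; rewrite (Ksub_char _ oP oQ).
by split; case=> a b; split.
Qed.

Lemma Ksubc_eq P Q : orth_proj ip P -> orth_proj ip Q ->
  Ksub (compl_op P) (compl_op Q) = [set x | P x = 0] `&` [set x | Q x = x].
Proof.
move=> oP oQ; apply/funext => x; apply/propext; rewrite (Ksubc_char _ oP oQ).
by split; case=> a b; split.
Qed.

Lemma op_lin T : orth_proj ip T -> linear T. Proof. by case=> [[]]. Qed.
Lemma op_bnd T : orth_proj ip T -> bnd ip T. Proof. by case=> [[]]. Qed.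

Lemma Ksub_sub P Q : orth_proj ip P -> orth_proj ip Q -> subsp (Ksub P Q).
Proof.
move=> oP oQ; rewrite Ksub_eq //; apply: subspI; apply: subsp_eq => //;
  [exact: op_lin| exact: op_lin | exact: lin0f].
Qed.

Lemma Ksubc_sub P Q : orth_proj ip P -> orth_proj ip Q ->
  subsp (Ksub (compl_op P) (compl_op Q)).
Proof.
move=> oP oQ; rewrite Ksubc_eq //; apply: subspI; apply: subsp_eq => //;
  [exact: op_lin| exact: lin0f | exact: op_lin].
Qed.

Lemma Ksub_closed P Q : orth_proj ip P -> orth_proj ip Q -> hclosed ip (Ksub P Q).
Proof.
move=> oP oQ; rewrite Ksub_eq //; apply: closedI; apply: closed_eq => //;
  by [exact: op_lin | exact: op_bnd | exact: bnd_id | exact: lin0f | exact: bnd0].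
Qed.

Lemma Ksubc_closed P Q : orth_proj ip P -> orth_proj ip Q ->
  hclosed ip (Ksub (compl_op P) (compl_op Q)).
Proof.
move=> oP oQ; rewrite Ksubc_eq //; apply: closedI; apply: closed_eq => //;
  by [exact: op_lin | exact: op_bnd | exact: bnd_id | exact: lin0f | exact: bnd0].
Qed.

Lemma forward P Q : orth_proj ip P -> orth_proj ip Q -> unitarily_swappable ip P Q ->
  same_hilbert_dim ip (Ksub P Q) (Ksub (compl_op P) (compl_op Q)).
Proof.
move=> oP oQ [U [Ui [[[lU _] Uip UK KU] hPQ hQP]]].
have lP := op_lin oP; have lQ := op_lin oQ.
have [B1 [B1K B11 B10 B1c]] := onb_exists hip (Ksub_sub oP oQ).
have Ui0 : Ui 0 = 0 by rewrite -{1}(lin0 lU) UK.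
exists B1, (U @` B1); split => //.
- split.
  + move=> _ [b /B1K Kb <-]; rewrite (Ksubc_char _ oP oQ).
    move: Kb; rewrite (Ksub_char _ oP oQ) => -[Pb Qb].
    by split; [rewrite -hQP UK Qb lin0 | rewrite -hPQ UK Pb].
  + by move=> _ [b Bb <-]; rewrite Uip B11.
  + move=> _ _ [b Bb <-] [b' Bb' <-] neq; rewrite Uip B10 // => eb.
    by apply: neq; rewrite eb.
  + move=> z; rewrite (Ksubc_char _ oP oQ) => -[Pz Qz] hz.
    have Kw : Ksub P Q (Ui z).
      rewrite (Ksub_char _ oP oQ); split.
        by rewrite -{2}Qz -hPQ UK.
      by rewrite -Ui0 -Pz -hQP UK.
    have w0 : Ui z = 0.
      apply: (B1c _ Kw) => b Bb; rewrite -Uip KU; apply: hz; by exists b.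
    by rewrite -(KU z) w0 lin0.
- rewrite card_eq_sym; apply: inj_card_eq => x y _ _; exact: (can_inj UK).
Qed.
End Forward.


Section SaBnd.
Variable R : realType.
Local Notation C := (R[i]).
Variables (V : lmodType C) (ip : V -> V -> C).
Hypothesis hip : inner_product ip.
Local Notation hn := (hnorm ip).

Lemma sa_idem_bnd T : (forall x, T (T x) = T x) ->
  (forall x y, ip (T x) y = ip x (T y)) -> bnd ip T.
Proof.
move=> iT sT; exists 1 => x; rewrite mul1r.
have h : hn (T x) ^+ 2 <= hn x * hn (T x).
  by rewrite (hn_sqr hip) /nsq sT iT; exact: ReCS.
have [h0|hp] := eqVneq (hn (T x)) 0; first by rewrite h0 hn_ge0.
have hp' : 0 < hn (T x) by rewrite lt_def hp hn_ge0.
by move: h; rewrite expr2 ler_pM2r.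
Qed.

Lemma orth_projP T : linear T -> (forall x, T (T x) = T x) ->
  (forall x y, ip (T x) y = ip x (T y)) -> orth_proj ip T.
Proof. by move=> lT iT sT; split => //; split => //; exact: sa_idem_bnd. Qed.
End SaBnd.


Section Alg.
Variable R : realType.
Local Notation C := (R[i]).
Variables (V : lmodType C) (ip : V -> V -> C).
Hypothesis hip : inner_product ip.
Local Notation hn := (hnorm ip).
Record algH (P Q pA pB pE TA TB : V -> V) : Prop := AlgH {
  h_lP : linear P;
  h_lQ : linear Q;
  h_lA : linear pA;
  h_lB : linear pB;
  h_lE : linear pE;
  h_lTA : linear TA;
  h_lTB : linear TB;
  h_saP : forall x y, ip (P x) y = ip x (P y);
  h_saQ : forall x y, ip (Q x) y = ip x (Q y);
  h_saA : forall x y, ip (pA x) y = ip x (pA y);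
  h_saB : forall x y, ip (pB x) y = ip x (pB y);
  h_saE : forall x y, ip (pE x) y = ip x (pE y);
  h_adjA : forall x y, ip (TA x) y = ip x (TB y);
  h_adjB : forall x y, ip (TB x) y = ip x (TA y);
  h_iP : forall x, P (P x) = P x;
  h_iQ : forall x, Q (Q x) = Q x;
  h_AA : forall x, pA (pA x) = pA x;
  h_AB : forall x, pA (pB x) = 0;
  h_AE : forall x, pA (pE x) = 0;
  h_BA : forall x, pB (pA x) = 0;
  h_BB : forall x, pB (pB x) = pB x;
  h_BE : forall x, pB (pE x) = 0;
  h_EA : forall x, pE (pA x) = 0;
  h_EB : forall x, pE (pB x) = 0;
  h_EE : forall x, pE (pE x) = pE x;
  h_PA : forall x, P (pA x) = pA x;
  h_PB : forall x, P (pB x) = 0;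
  h_QA : forall x, Q (pA x) = 0;
  h_QB : forall x, Q (pB x) = pB x;
  h_PEQ : forall x, P (pE x) = Q (pE x);
  h_AP : forall x, pA (P x) = pA x;
  h_BP : forall x, pB (P x) = 0;
  h_EP : forall x, pE (P x) = P (pE x);
  h_AQ : forall x, pA (Q x) = 0;
  h_BQ : forall x, pB (Q x) = pB x;
  h_EQ : forall x, pE (Q x) = Q (pE x);
  h_ATA : forall x, pA (TA x) = 0;
  h_BTA : forall x, pB (TA x) = TA x;
  h_ETA : forall x, pE (TA x) = 0;
  h_ATB : forall x, pA (TB x) = TB x;
  h_BTB : forall x, pB (TB x) = 0;
  h_ETB : forall x, pE (TB x) = 0;
  h_PTA : forall x, P (TA x) = 0;
  h_QTA : forall x, Q (TA x) = TA x;
  h_PTB : forall x, P (TB x) = TB x;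
  h_QTB : forall x, Q (TB x) = 0;
  h_TAA : forall x, TA (pA x) = TA x;
  h_TBB : forall x, TB (pB x) = TB x;
  h_TAB : forall x, TA (TB x) = pB x;
  h_TBA : forall x, TB (TA x) = pA x;
  h_memA : forall x, P x = x -> Q x = 0 -> pA x = x;
  h_memB : forall x, P x = 0 -> Q x = x -> pB x = x;
  h_memE : forall x, P x = Q x -> pE x = x
}.

Variables (P Q pA pB pE TA TB : V -> V).
Hypothesis Hal : algH P Q pA pB pE TA TB.
Let lP := h_lP Hal.
Let lQ := h_lQ Hal.
Let lA := h_lA Hal.
Let lB := h_lB Hal.
Let lE := h_lE Hal.
Let lTA := h_lTA Hal.
Let lTB := h_lTB Hal.
Let saP := h_saP Hal.
Let saQ := h_saQ Hal.
Let saA := h_saA Hal.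
Let saB := h_saB Hal.
Let saE := h_saE Hal.
Let adjA := h_adjA Hal.
Let adjB := h_adjB Hal.
Let iP := h_iP Hal.
Let iQ := h_iQ Hal.
Let AA := h_AA Hal.
Let AB := h_AB Hal.
Let AE := h_AE Hal.
Let BA := h_BA Hal.
Let BB := h_BB Hal.
Let BE := h_BE Hal.
Let EA := h_EA Hal.
Let EB := h_EB Hal.
Let EE := h_EE Hal.
Let PA := h_PA Hal.
Let PB := h_PB Hal.
Let QA := h_QA Hal.
Let QB := h_QB Hal.
Let PEQ := h_PEQ Hal.
Let AP := h_AP Hal.
Let BP := h_BP Hal.
Let EP := h_EP Hal.
Let AQ := h_AQ Hal.
Let BQ := h_BQ Hal.
Let EQ := h_EQ Hal.
Let ATA := h_ATA Hal.
Let BTA := h_BTA Hal.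
Let ETA := h_ETA Hal.
Let ATB := h_ATB Hal.
Let BTB := h_BTB Hal.
Let ETB := h_ETB Hal.
Let PTA := h_PTA Hal.
Let QTA := h_QTA Hal.
Let PTB := h_PTB Hal.
Let QTB := h_QTB Hal.
Let TAA := h_TAA Hal.
Let TBB := h_TBB Hal.
Let TAB := h_TAB Hal.
Let TBA := h_TBA Hal.
Let memA := h_memA Hal.
Let memB := h_memB Hal.
Let memE := h_memE Hal.

Definition pF x := pA x + pB x + pE x.
Definition gp x := x - pF x.
Definition Sw x := pE x + TA x + TB x.
Definition P' x := P (gp x) + pF x.
Definition Q' x := Q (gp x) + pF x.

Lemma add3ACA (a1 b1 c1 a2 b2 c2 : V) :
  (a1 + b1 + c1) + (a2 + b2 + c2) = (a1 + a2) + (b1 + b2) + (c1 + c2).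
Proof. by rewrite addrACA (addrACA a1). Qed.

Lemma lpF : linear pF.
Proof.
move=> a x y; rewrite /pF (linD lA) (linD lB) (linD lE) (linZ lA) (linZ lB) (linZ lE).
by rewrite !scalerDr add3ACA.
Qed.

Lemma pF_A x : pA (pF x) = pA x.
Proof. by rewrite /pF !(linD lA) AA AB AE !addr0. Qed.
Lemma pF_B x : pB (pF x) = pB x.
Proof. by rewrite /pF !(linD lB) BA BB BE add0r addr0. Qed.
Lemma pF_E x : pE (pF x) = pE x.
Proof. by rewrite /pF !(linD lE) EA EB EE !add0r. Qed.
Lemma pF_idem x : pF (pF x) = pF x.
Proof. by rewrite {1}/pF pF_A pF_B pF_E. Qed.
Lemma pF_sa x y : ip (pF x) y = ip x (pF y).
Proof. by rewrite /pF !(ipDl hip) !(ipDr hip) saA saB saE. Qed.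
Lemma P_pF x : P (pF x) = pF (P x).
Proof. by rewrite /pF !(linD lP) PA PB AP BP EP. Qed.
Lemma Q_pF x : Q (pF x) = pF (Q x).
Proof. by rewrite /pF !(linD lQ) QA QB AQ BQ EQ. Qed.
Lemma pF_gp x : pF (gp x) = 0.
Proof. by rewrite /gp (linB lpF) pF_idem subrr. Qed.
Lemma gp_pF x : gp (pF x) = 0.
Proof. by rewrite /gp pF_idem subrr. Qed.
Lemma P_gp x : P (gp x) = gp (P x).
Proof. by rewrite /gp (linB lP) P_pF. Qed.
Lemma Q_gp x : Q (gp x) = gp (Q x).
Proof. by rewrite /gp (linB lQ) Q_pF. Qed.
Lemma lgp : linear gp.
Proof.
by move=> a x y; rewrite /gp (lpF a x y) scalerBr opprD addrACA.
Qed.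
Lemma gpK x : gp (gp x) = gp x.
Proof. by rewrite {1}/gp pF_gp subr0. Qed.
Lemma gp_G x : pF x = 0 -> gp x = x.
Proof. by rewrite /gp => ->; rewrite subr0. Qed.
Lemma gp_add x : gp x + pF x = x.
Proof. by rewrite /gp subrK. Qed.

Lemma TAk y : pA y = 0 -> TA y = 0.
Proof. by move=> h; rewrite -TAA h lin0. Qed.
Lemma TBk y : pB y = 0 -> TB y = 0.
Proof. by move=> h; rewrite -TBB h lin0. Qed.
Lemma TA_pF x : TA (pF x) = TA x.
Proof. by rewrite -TAA pF_A TAA. Qed.
Lemma TB_pF x : TB (pF x) = TB x.
Proof. by rewrite -TBB pF_B TBB. Qed.

Lemma lSw : linear Sw.
Proof.
move=> a x y; rewrite /Sw (linD lE) (linD lTA) (linD lTB) (linZ lE) (linZ lTA) (linZ lTB).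
by rewrite !scalerDr add3ACA.
Qed.
Lemma Sw_pF x : Sw (pF x) = Sw x.
Proof. by rewrite /Sw pF_E TA_pF TB_pF. Qed.
Lemma pF_Sw x : pF (Sw x) = Sw x.
Proof.
rewrite /pF /Sw !(linD lA) !(linD lB) !(linD lE) AE ATA ATB BE BTA BTB EE ETA ETB.
by rewrite !add0r !addr0 addrC (addrC (TB x)) addrA.
Qed.
Lemma Sw_G y : pF y = 0 -> Sw y = 0.
Proof. by move=> h; rewrite -Sw_pF h (lin0 lSw). Qed.
Lemma Sw_Sw x : Sw (Sw x) = pF x.
Proof.
have hA : pA (Sw x) = TB x by rewrite /Sw !(linD lA) AE ATA ATB !add0r.
have hB : pB (Sw x) = TA x by rewrite /Sw !(linD lB) BE BTA BTB add0r addr0.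
rewrite {1}/Sw -TAA hA TAB -TBB hB TBA /Sw !(linD lE) EE ETA ETB !addr0.
by rewrite /pF addrC (addrC (pE x)) addrA.
Qed.
Lemma Sw_sa x y : ip (Sw x) y = ip x (Sw y).
Proof.
rewrite /Sw !(ipDl hip) !(ipDr hip) saE adjA adjB.
by rewrite -!addrA [ip x (TB y) + _]addrC.
Qed.
Lemma SPS x : Sw (P (Sw x)) = Q (pF x).
Proof.
rewrite {2}/Sw !(linD lP) PTA PTB addr0 (linD lSw).
have -> : Sw (P (pE x)) = P (pE x).
  rewrite /Sw EP EE (TAk (y := P (pE x))) ?AP ?AE // (TBk (y := P (pE x))) ?BP //.
  by rewrite !addr0.
have -> : Sw (TB x) = pB x by rewrite /Sw ETB TAB (TBk (y := TB x)) // addr0 add0r.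
by rewrite /pF !(linD lQ) QA QB PEQ add0r addrC.
Qed.
Lemma SQS x : Sw (Q (Sw x)) = P (pF x).
Proof.
rewrite {2}/Sw !(linD lQ) QTA QTB addr0 (linD lSw).
have -> : Sw (Q (pE x)) = Q (pE x).
  rewrite /Sw EQ EE (TAk (y := Q (pE x))) ?AQ // (TBk (y := Q (pE x))) ?BQ ?BE //.
  by rewrite !addr0.
have -> : Sw (TA x) = pA x by rewrite /Sw ETA TBA (TAk (y := TA x)) // addr0 add0r.
by rewrite /pF !(linD lP) PA PB PEQ addr0 addrC.
Qed.

Lemma gp_sa x y : ip (gp x) y = ip x (gp y).
Proof. by rewrite /gp (ipBl hip) (ipBr hip) pF_sa. Qed.
Lemma pA_gp x : pA (gp x) = 0.
Proof. by rewrite /gp (linB lA) pF_A subrr. Qed.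
Lemma pB_gp x : pB (gp x) = 0.
Proof. by rewrite /gp (linB lB) pF_B subrr. Qed.
Lemma pE_gp x : pE (gp x) = 0.
Proof. by rewrite /gp (linB lE) pF_E subrr. Qed.

Lemma lin_comb (T1 T2 : V -> V) : linear T1 -> linear T2 ->
  linear (fun x => T1 x + T2 x).
Proof.
move=> l1 l2 a x y /=; rewrite (l1 a x y) (l2 a x y) scalerDr.
by rewrite addrACA.
Qed.
Lemma lin_compo (T1 T2 : V -> V) : linear T1 -> linear T2 -> linear (fun x => T1 (T2 x)).
Proof. by move=> l1 l2 a x y /=; rewrite (l2 a x y) (l1 a). Qed.

Lemma lP' : linear P'.
Proof. exact: lin_comb (lin_compo lP lgp) lpF. Qed.
Lemma lQ' : linear Q'.
Proof. exact: lin_comb (lin_compo lQ lgp) lpF. Qed.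
Lemma pF_P' x : pF (P' x) = pF x.
Proof. by rewrite /P' (linD lpF) -P_pF pF_gp (lin0 lP) add0r pF_idem. Qed.
Lemma pF_Q' x : pF (Q' x) = pF x.
Proof. by rewrite /Q' (linD lpF) -Q_pF pF_gp (lin0 lQ) add0r pF_idem. Qed.
Lemma gp_P' x : gp (P' x) = P (gp x).
Proof. by rewrite {1}/gp pF_P' /P' addrK. Qed.
Lemma gp_Q' x : gp (Q' x) = Q (gp x).
Proof. by rewrite {1}/gp pF_Q' /Q' addrK. Qed.
Lemma iP' x : P' (P' x) = P' x.
Proof. by rewrite {1}/P' gp_P' pF_P' iP. Qed.
Lemma iQ' x : Q' (Q' x) = Q' x.
Proof. by rewrite {1}/Q' gp_Q' pF_Q' iQ. Qed.
Lemma saP' x y : ip (P' x) y = ip x (P' y).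
Proof.
rewrite /P' (ipDl hip) (ipDr hip) saP gp_sa pF_sa -P_gp; congr (_ + _).
Qed.
Lemma saQ' x y : ip (Q' x) y = ip x (Q' y).
Proof.
rewrite /Q' (ipDl hip) (ipDr hip) saQ gp_sa pF_sa -Q_gp; congr (_ + _).
Qed.

Lemma K1triv x : P' x = x -> Q' x = 0 -> x = 0.
Proof.
move=> h1 h2.
have F0 : pF x = 0 by rewrite -pF_Q' h2 (lin0 lpF).
move: h1 h2; rewrite /P' /Q' F0 !addr0 (gp_G F0) => h1 h2.
by rewrite -(memA h1 h2) -pF_A F0 (lin0 lA).
Qed.
Lemma K2triv x : P' x = 0 -> Q' x = x -> x = 0.
Proof.
move=> h1 h2.
have F0 : pF x = 0 by rewrite -pF_P' h1 (lin0 lpF).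
move: h1 h2; rewrite /P' /Q' F0 !addr0 (gp_G F0) => h1 h2.
by rewrite -(memB h1 h2) -pF_B F0 (lin0 lB).
Qed.
Lemma Fix y : P' y = y -> Q' y = y -> pF y = y.
Proof.
move=> h1 h2.
have g1 : P (gp y) = gp y by rewrite {2}/gp -{2}h1 /P' addrK.
have g2 : Q (gp y) = gp y by rewrite {2}/gp -{2}h2 /Q' addrK.
have : gp y = 0 by rewrite -(memE (etrans g1 (esym g2))) pE_gp.
by rewrite /gp => /eqP; rewrite subr_eq0 => /eqP.
Qed.
Lemma FixC y : pF y = y -> P' y = y /\ Q' y = y.
Proof.
move=> h; have g0 : gp y = 0 by rewrite /gp h subrr.
by rewrite /P' /Q' g0 (lin0 lP) (lin0 lQ) !add0r h.
Qed.

Section Swap.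
Variables (W Wi : V -> V).
Hypothesis hWu : unitary_with_inverse ip W Wi.
Hypotheses (hW1 : forall x, W (P' (Wi x)) = Q' x) (hW2 : forall x, W (Q' (Wi x)) = P' x).

Lemma lW : linear W. Proof. by case: hWu => [[]]. Qed.
Lemma WK x : Wi (W x) = x. Proof. by case: hWu => _ _ h _; apply: h. Qed.
Lemma KW x : W (Wi x) = x. Proof. by case: hWu => _ _ _ h; apply: h. Qed.
Lemma ipW x y : ip (W x) (W y) = ip x y. Proof. by case: hWu => _ h _ _; apply: h. Qed.
Lemma ipWi x y : ip (Wi x) (Wi y) = ip x y. Proof. by rewrite -ipW !KW. Qed.
Lemma lWi : linear Wi.
Proof.
by move=> a x y; apply: (can_inj WK); rewrite KW lW !KW.
Qed.
Lemma WP x : W (P' x) = Q' (W x). Proof. by rewrite -hW1 WK. Qed.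
Lemma WQ x : W (Q' x) = P' (W x). Proof. by rewrite -hW2 WK. Qed.
Lemma WiP x : Wi (P' x) = Q' (Wi x). Proof. by apply: (can_inj WK); rewrite KW WQ KW. Qed.
Lemma WiQ x : Wi (Q' x) = P' (Wi x). Proof. by apply: (can_inj WK); rewrite KW WP KW. Qed.

Lemma WF y : pF y = y -> pF (W y) = W y.
Proof.
move=> /FixC[h1 h2]; apply: Fix; first by rewrite -WQ h2.
by rewrite -WP h1.
Qed.
Lemma WiF y : pF y = y -> pF (Wi y) = Wi y.
Proof.
move=> /FixC[h1 h2]; apply: Fix; first by rewrite -WiQ h2.
by rewrite -WiP h1.
Qed.

Lemma presG (X Y : V -> V) : (forall x y, ip (X x) (X y) = ip x y) ->
  (forall z, X (Y z) = z) -> (forall y, pF y = y -> pF (Y y) = Y y) ->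
  forall x, pF x = 0 -> pF (X x) = 0.
Proof.
move=> iX XY YF x h; apply: (ip_eq0 hip).
set z := pF (X x).
have Fz : pF z = z by rewrite /z pF_idem.
by rewrite {1}/z pF_sa Fz -{1}(XY z) iX -(YF _ Fz) -pF_sa h (ip0l hip).
Qed.
Lemma WG x : pF x = 0 -> pF (W x) = 0.
Proof. exact: (presG ipW KW WiF). Qed.
Lemma WiG x : pF x = 0 -> pF (Wi x) = 0.
Proof. exact: (presG ipWi WK WF). Qed.

Section Gen.
Variables (X Y : V -> V).
Hypotheses (lX : linear X) (iX : forall x y, ip (X x) (X y) = ip x y)
  (XG : forall x, pF x = 0 -> pF (X x) = 0) (YX : forall x, Y (X x) = x).
Definition UU x := X (gp x) + Sw x.
Definition UUi x := Y (gp x) + Sw x.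

Lemma pF_UU x : pF (UU x) = Sw x.
Proof. by rewrite /UU (linD lpF) XG ?pF_gp // add0r pF_Sw. Qed.
Lemma gp_UU x : gp (UU x) = X (gp x).
Proof. by rewrite {1}/gp pF_UU /UU addrK. Qed.
Lemma Sw_UU x : Sw (UU x) = pF x.
Proof. by rewrite /UU (linD lSw) Sw_G ?XG ?pF_gp // add0r Sw_Sw. Qed.
Lemma UUK x : UUi (UU x) = x.
Proof. by rewrite /UUi gp_UU YX Sw_UU gp_add. Qed.
Lemma ipUU x y : ip (UU x) (UU y) = ip x y.
Proof.
rewrite /UU (ipDl hip (X (gp x))) (ipDr hip (X (gp y)) (Sw y) (X (gp x))) (ipDr hip (X (gp y)) (Sw y) (Sw x)) iX.
have -> : ip (X (gp x)) (Sw y) = 0.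
  by rewrite -pF_Sw -pF_sa XG ?pF_gp // (ip0l hip).
have -> : ip (Sw x) (X (gp y)) = 0.
  by rewrite -pF_Sw pF_sa XG ?pF_gp // (ip0r hip).
rewrite Sw_sa Sw_Sw gp_sa gpK addr0 add0r -(ipDr hip).
by rewrite gp_add.
Qed.
Lemma lUU : linear UU.
Proof. exact: lin_comb (lin_compo lX lgp) lSw. Qed.
End Gen.

Definition U := UU W.
Definition Ui := UU Wi.

Lemma U_unitary : unitary_with_inverse ip U Ui.
Proof.
split.
- split; first exact: lUU lW.
  by exists 1 => x; rewrite mul1r /hnorm (ipUU ipW WG).
- exact: (ipUU ipW WG).
- exact: (UUK WG WK).
- exact: (UUK WiG KW).
Qed.

Lemma U_swap1 x : U (P (Ui x)) = Q x.
Proof.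
rewrite /U {1}/UU -P_gp (gp_UU WiG) -Sw_pF -P_pF (pF_UU WiG) SPS.
have G0 : pF (Wi (gp x)) = 0 by apply: WiG; exact: pF_gp.
have -> : P (Wi (gp x)) = P' (Wi (gp x)) by rewrite /P' G0 addr0 (gp_G G0).
by rewrite WP KW /Q' gpK pF_gp addr0 -(linD lQ) gp_add.
Qed.
Lemma U_swap2 x : U (Q (Ui x)) = P x.
Proof.
rewrite /U {1}/UU -Q_gp (gp_UU WiG) -Sw_pF -Q_pF (pF_UU WiG) SQS.
have G0 : pF (Wi (gp x)) = 0 by apply: WiG; exact: pF_gp.
have -> : Q (Wi (gp x)) = Q' (Wi (gp x)) by rewrite /Q' G0 addr0 (gp_G G0).
by rewrite WQ KW /P' gpK pF_gp addr0 -(linD lP) gp_add.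
Qed.
End Swap.
End Alg.


Section Back.
Variable R : realType.
Local Notation C := (R[i]).
Variables (V : lmodType C) (ip : V -> V -> C).
Hypotheses (hip : inner_product ip) (hc : hcomplete ip) (hsep : hseparable ip).
Variables (P Q : V -> V).
Hypotheses (oP : orth_proj ip P) (oQ : orth_proj ip Q).

Let lP := op_lin oP.
Let lQ := op_lin oQ.
Let saP : forall x y, ip (P x) y = ip x (P y). Proof. by case: oP. Qed.
Let saQ : forall x y, ip (Q x) y = ip x (Q y). Proof. by case: oQ. Qed.
Let iP : forall x, P (P x) = P x. Proof. by case: oP. Qed.
Let iQ : forall x, Q (Q x) = Q x. Proof. by case: oQ. Qed.

Lemma o12 x y : P x = x -> Q x = 0 -> P y = 0 -> Q y = y -> ip x y = 0.
Proof. by move=> _ h _ hy; rewrite -hy -saQ h (ip0l hip). Qed.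
Lemma o21 x y : P x = 0 -> Q x = x -> P y = y -> Q y = 0 -> ip x y = 0.
Proof. by move=> _ hx _ h; rewrite -hx saQ h (ip0r hip). Qed.
Lemma oE1 x y : P x = Q x -> P y = y -> Q y = 0 -> ip x y = 0.
Proof. by move=> h hy h2; rewrite -hy -saP h saQ h2 (ip0r hip). Qed.
Lemma oE2 x y : P x = Q x -> P y = 0 -> Q y = y -> ip x y = 0.
Proof. by move=> h h2 hy; rewrite -hy -saQ -h saP h2 (ip0r hip). Qed.
Lemma o1E x y : P x = x -> Q x = 0 -> P y = Q y -> ip x y = 0.
Proof. by move=> hx h h2; rewrite -hx saP h2 -saQ h (ip0l hip). Qed.
Lemma o2E x y : P x = 0 -> Q x = x -> P y = Q y -> ip x y = 0.
Proof. by move=> h hx h2; rewrite -hx saQ -h2 -saP h (ip0l hip). Qed.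

Lemma backward :
  (forall P' Q' : V -> V, orth_proj ip P' -> orth_proj ip Q' ->
     Ksub P' Q' = [set 0] -> Ksub (compl_op P') (compl_op Q') = [set 0] ->
     unitarily_swappable ip P' Q') ->
  same_hilbert_dim ip (Ksub P Q) (Ksub (compl_op P) (compl_op Q)) ->
  unitarily_swappable ip P Q.
Proof.
move=> Hgen [B1 [B2 [onb1 onb2 card]]].
have bP := op_bnd oP; have bQ := op_bnd oQ.
have K1E x : Ksub P Q x <-> P x = x /\ Q x = 0 := Ksub_char x oP oQ.
have K2E x : Ksub (compl_op P) (compl_op Q) x <-> P x = 0 /\ Q x = x :=
  Ksubc_char x oP oQ.
have sK1 := Ksub_sub oP oQ; have cK1 := Ksub_closed hip oP oQ.
have sK2 := Ksubc_sub oP oQ; have cK2 := Ksubc_closed hip oP oQ.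
have sE : subsp [set x | P x = Q x] := subsp_eq lP lQ.
have cE : hclosed ip [set x | P x = Q x] := closed_eq hip lP bP lQ bQ.
have [e [oe eB Be]] := onb_enum hip hsep onb1.
have [h [hB hinj hsurj]] := bij_ext 0 card.
case: (onb1) => B1K B11 _ _; case: (onb2) => B2K B21 _ _.
have nz1 b : B1 b -> b != 0.
  by move=> /B11; apply: contra_eq_neq => ->; rewrite (ip0l hip) eq_sym oner_neq0.
have nz2 b : B2 b -> b != 0.
  by move=> /B21; apply: contra_eq_neq => ->; rewrite (ip0l hip) eq_sym oner_neq0.
pose f n := if e n != 0 then h (e n) else 0.
have fE n : e n != 0 -> f n = h (e n) by rewrite /f => ->.
have f0 n : e n = 0 -> f n = 0 by rewrite /f => ->; rewrite eqxx.
have sfe : supp_eq e f.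
  move=> m; have [em|em] := eqVneq (e m) 0; first by rewrite f0 // eqxx.
  by rewrite fE // (negbTE (nz2 _ (hB _ (eB _ em)))).
have fB n : f n != 0 -> B2 (f n).
  move=> fn; have en : e n != 0 by rewrite -[_ != _]negbK sfe negbK.
  by rewrite fE //; apply: hB; apply: eB.
have Bf b : B2 b -> exists n, f n = b.
  move=> /hsurj[a [Ba <-]]; have [n en] := Be a Ba; exists n.
  by rewrite fE en // nz1.
have ofz : onz ip f.
  split; first by move=> n /fB; exact: B21.
  move=> n m nm; have [fn|fn] := eqVneq (f n) 0; first by rewrite fn (ip0l hip).
  have [fm|fm] := eqVneq (f m) 0; first by rewrite fm (ip0r hip).
  have en : e n != 0 by rewrite -[_ != _]negbK sfe negbK.
  have em : e m != 0 by rewrite -[_ != _]negbK sfe negbK.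
  case: (onb2) => _ _ B20 _; apply: B20; [exact: fB | exact: fB |].
  rewrite !fE // => /(hinj _ _ (eB _ en) (eB _ em)) enm.
  by move: (proj2 oe n m nm); rewrite enm (proj1 oe) // => /eqP; rewrite oner_eq0.
have [BE onbE] := onb_exists hip sE.
have [g [og gB Bg]] := onb_enum hip hsep onbE.
pose pA := Phi ip e e; pose pB := Phi ip f f; pose pE := Phi ip g g.
pose TA := Phi ip e f; pose TB := Phi ip f e.
have prA : isproj ip (Ksub P Q) pA := onb_proj hip hc sK1 cK1 onb1 oe eB Be.
have prB : isproj ip (Ksub (compl_op P) (compl_op Q)) pB :=
  onb_proj hip hc sK2 cK2 onb2 ofz fB Bf.
have prE : isproj ip [set x | P x = Q x] pE := onb_proj hip hc sE cE onbE og gB Bg.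
have Ke i : Ksub P Q (e i).
  have [->|/eB /B1K //] := eqVneq (e i) 0; by case: sK1.
have Kf i : Ksub (compl_op P) (compl_op Q) (f i).
  have [->|/fB /B2K //] := eqVneq (f i) 0; by case: sK2.
have TAK x : Ksub (compl_op P) (compl_op Q) (TA x) := Phi_in hip hc x oe ofz sK2 cK2 Kf.
have TBK x : Ksub P Q (TB x) := Phi_in hip hc x ofz oe sK1 cK1 Ke.
case: (prA) => lA inA fixA saA.
case: (prB) => lB inB fixB saB.
case: (prE) => lE inE fixE saE.
have Hal : algH ip P Q pA pB pE TA TB.
  have inA' x : P (pA x) = pA x /\ Q (pA x) = 0 := (K1E _).1 (inA x).
  have inB' x : P (pB x) = 0 /\ Q (pB x) = pB x := (K2E _).1 (inB x).
  have TAK' x : P (TA x) = 0 /\ Q (TA x) = TA x := (K2E _).1 (TAK x).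
  have TBK' x : P (TB x) = TB x /\ Q (TB x) = 0 := (K1E _).1 (TBK x).
  have PK1 y : Ksub P Q y -> Ksub P Q (P y).
    by move=> /K1E[h1 h2]; apply/K1E; rewrite iP h1.
  have PK2 y : Ksub (compl_op P) (compl_op Q) y -> Ksub (compl_op P) (compl_op Q) (P y).
    by move=> /K2E[h1 h2]; apply/K2E; rewrite h1 (lin0 lQ) (lin0 lP).
  have PKE y : P y = Q y -> P (P y) = Q (P y).
    by move=> hy; rewrite iP {2}hy iQ.
  have QK1 y : Ksub P Q y -> Ksub P Q (Q y).
    by move=> /K1E[h1 h2]; apply/K1E; rewrite h2 (lin0 lQ) (lin0 lP).
  have QK2 y : Ksub (compl_op P) (compl_op Q) y -> Ksub (compl_op P) (compl_op Q) (Q y).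
    by move=> /K2E[h1 h2]; apply/K2E; rewrite iQ h2.
  have QKE y : P y = Q y -> P (Q y) = Q (Q y).
    by move=> hy; rewrite iQ -{1}hy iP.
  split.
  - exact: lP.
  - exact: lQ.
  - exact: lA.
  - exact: lB.
  - exact: lE.
  - exact: (Phi_lin hip hc oe ofz).
  - exact: (Phi_lin hip hc ofz oe).
  - exact: saP.
  - exact: saQ.
  - exact: saA.
  - exact: saB.
  - exact: saE.
  - by move=> x y; exact: (Phi_adj hip hc x y oe ofz).
  - by move=> x y; exact: (Phi_adj hip hc x y ofz oe).
  - exact: iP.
  - exact: iQ.
  - exact: (proj_idem prA).
  - move=> x; apply: (proj_orth hip prA) => z /K1E[hz1 hz2].
    by case: (inB' x) => h1 h2; exact: (o21 h1 h2 hz1 hz2).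
  - move=> x; apply: (proj_orth hip prA) => z /K1E[hz1 hz2].
    exact: (oE1 (inE x) hz1 hz2).
  - move=> x; apply: (proj_orth hip prB) => z /K2E[hz1 hz2].
    by case: (inA' x) => h1 h2; exact: (o12 h1 h2 hz1 hz2).
  - exact: (proj_idem prB).
  - move=> x; apply: (proj_orth hip prB) => z /K2E[hz1 hz2].
    exact: (oE2 (inE x) hz1 hz2).
  - move=> x; apply: (proj_orth hip prE) => z hz.
    by case: (inA' x) => h1 h2; exact: (o1E h1 h2 hz).
  - move=> x; apply: (proj_orth hip prE) => z hz.
    by case: (inB' x) => h1 h2; exact: (o2E h1 h2 hz).
  - exact: (proj_idem prE).
  - by move=> x; case: (inA' x).
  - by move=> x; case: (inB' x).
  - by move=> x; case: (inA' x).
  - by move=> x; case: (inB' x).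
  - by move=> x; exact: inE.
  - by move=> x; rewrite -(proj_comm hip prA lP saP PK1 sK1); case: (inA' x).
  - by move=> x; rewrite -(proj_comm hip prB lP saP PK2 sK2); case: (inB' x).
  - by move=> x; rewrite -(proj_comm hip prE lP saP PKE sE).
  - by move=> x; rewrite -(proj_comm hip prA lQ saQ QK1 sK1); case: (inA' x).
  - by move=> x; rewrite -(proj_comm hip prB lQ saQ QK2 sK2); case: (inB' x).
  - by move=> x; rewrite -(proj_comm hip prE lQ saQ QKE sE).
  - move=> x; apply: (proj_orth hip prA) => z /K1E[hz1 hz2].
    by case: (TAK' x) => h1 h2; exact: (o21 h1 h2 hz1 hz2).
  - by move=> x; apply: fixB; exact: TAK.
  - move=> x; apply: (proj_orth hip prE) => z hz.
    by case: (TAK' x) => h1 h2; exact: (o2E h1 h2 hz).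
  - by move=> x; apply: fixA; exact: TBK.
  - move=> x; apply: (proj_orth hip prB) => z /K2E[hz1 hz2].
    by case: (TBK' x) => h1 h2; exact: (o12 h1 h2 hz1 hz2).
  - move=> x; apply: (proj_orth hip prE) => z hz.
    by case: (TBK' x) => h1 h2; exact: (o1E h1 h2 hz).
  - by move=> x; case: (TAK' x).
  - by move=> x; case: (TAK' x).
  - by move=> x; case: (TBK' x).
  - by move=> x; case: (TBK' x).
  - move=> x; apply: (Phi_coef_eq hip hc oe oe ofz) => i.
    by rewrite saA fixA.
  - move=> x; apply: (Phi_coef_eq hip hc ofz ofz oe) => i.
    by rewrite saB fixB.
  - move=> x; apply: (Phi_comp hip hc x ofz oe ofz) => m; exact/esym/sfe.
  - by move=> x; apply: (Phi_comp hip hc x oe ofz oe).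
  - by move=> x h1 h2; apply: fixA; apply/K1E.
  - by move=> x h1 h2; apply: fixB; apply/K2E.
  - by move=> x hy; apply: fixE.

pose P' := P' P pA pB pE; pose Q' := Q' Q pA pB pE.
have oP' : orth_proj ip P' := orth_projP hip (lP' Hal) (iP' Hal) (saP' hip Hal).
have oQ' : orth_proj ip Q' := orth_projP hip (lQ' Hal) (iQ' Hal) (saQ' hip Hal).
have K1' : Ksub P' Q' = [set 0].
  apply/funext => x; apply/propext; rewrite (Ksub_char x oP' oQ'); split.
    by case=> h1 h2; exact: (K1triv Hal h1 h2).
  by move=> ->; rewrite !lin0 //; [exact: op_lin oQ' | exact: op_lin oP'].
have K2' : Ksub (compl_op P') (compl_op Q') = [set 0].
  apply/funext => x; apply/propext; rewrite (Ksubc_char x oP' oQ'); split.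
    by case=> h1 h2; exact: (K2triv Hal h1 h2).
  by move=> ->; rewrite !lin0 //; [exact: op_lin oQ' | exact: op_lin oP'].
have [W [Wi [hWu hW1 hW2]]] := Hgen _ _ oP' oQ' K1' K2'.
exists (U pA pB pE TA TB W), (Ui pA pB pE TA TB Wi); split.
- exact: (U_unitary hip Hal hWu hW1 hW2).
- exact: (U_swap1 hip Hal hWu hW1 hW2).
- exact: (U_swap2 hip Hal hWu hW1 hW2).
Qed.
End Back.


Unset Implicit Arguments.
Theorem lemma4 (R : realType) :
  (forall (V' : lmodType R[i]) (ip' : V' -> V' -> R[i]) (P' Q' : V' -> V'),
      separable_hilbert_space ip' -> orth_proj ip' P' -> orth_proj ip' Q' ->
      Ksub P' Q' = [set (0 : V')%R]%classic -> Ksub (compl_op P') (compl_op Q') = [set (0 : V')%R]%classic ->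
      unitarily_swappable ip' P' Q') ->
  forall (V : lmodType R[i]) (ip : V -> V -> R[i]) (P Q : V -> V),
    separable_hilbert_space ip -> orth_proj ip P -> orth_proj ip Q ->
    (unitarily_swappable ip P Q <->
     same_hilbert_dim ip (Ksub P Q) (Ksub (compl_op P) (compl_op Q))).
Proof.
move=> Hyp V ip P Q hs oP oQ.
have [hip hc hsep] := hs.
split; first exact: (forward hip oP oQ).
apply: (backward hip hc hsep oP oQ) => P' Q' o1 o2 k1 k2.
exact: (Hyp V ip P' Q' hs o1 o2 k1 k2).
Qed.
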